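(* Let $G$ be an Abelian group and $(\rho,V)$ a linear representation of $G$ on a finite-dimensional vector space $V$ over a field $k$. Let $A$ be a nonempty finite subset of $G$ and $Y\neq\{0\}$ a $k$-subspace of $V$ with $\dim(A\cdot Y)\leq\alpha\dim(Y)$ for some $\alpha\in\mathbb{R}_{\geq0}$. Then there exists a $k$-subspace $Z\neq\{0\}$ of $Y$ such that $\dim(AC\cdot Z)\leq\alpha\dim(C\cdot Z)$ for every finite subset $C$ of $G$.
   Context: $g\cdot v=\rho(g)v$; for $S\subset G$ and a subspace $Z$, $S\cdot Z$ denotes the $k$-span of $\{s\cdot z\mid s\in S,z\in Z\}$; $AC=\{ac\mid a\in A,c\in C\}$. *)

(* Defs.v *)
(* abelian group G as an (additive) zmodType, V a finite-dimensional
   k-vector space (vectType), subspaces {vspace V}, finite subsets {fset G}. *)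
From HB Require Import structures.
From mathcomp Require Import all_boot all_order all_algebra.
From mathcomp Require Import finmap.
From mathcomp Require Import reals.
Set Implicit Arguments. Unset Strict Implicit. Unset Printing Implicit Defensive.
Import Order.TTheory GRing.Theory Num.Theory.
Local Open Scope ring_scope.

(* rho is a linear representation of the (additively written) abelian group G on V:
   rho g is a linear endomorphism, rho 0 = id, rho (g+h) = rho g o rho h.
   (Invertibility of each rho g follows.) *)
Definition is_representation (k : fieldType) (G : zmodType) (V : vectType k)
  (rho : G -> 'End(V)) : Prop :=
  rho 0 = \1%VF /\ forall g h : G, rho (g + h) = (rho g \o rho h)%VF.

Definition act_span (k : fieldType) (G : zmodType) (V : vectType k)
  (rho : G -> 'End(V)) (S : {fset G}) (Z : {vspace V}) : {vspace V} :=
  (\sum_(s <- enum_fset S) (rho s @: Z))%VS.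

Definition fset_prod (G : zmodType) (A C : {fset G}) : {fset G} :=
  [fset (a + c)%R | a in A, c in C]%fset.

(* Main.v *)
Require Import Defs.
From HB Require Import structures.
From mathcomp Require Import all_boot all_order all_algebra.
From mathcomp Require Import finmap.
From mathcomp Require Import reals.
From Stdlib Require Import Classical_Prop.
Import Order.TTheory GRing.Theory Num.Theory.
Local Open Scope ring_scope.

Lemma act_span_le (k : fieldType) (G : zmodType) (V : vectType k)
  (rho : G -> 'End(V)) (S : {fset G}) (Z W : {vspace V}) :
  (forall s, s \in S -> (rho s @: Z <= W)%VS) -> (act_span rho S Z <= W)%VS.
Proof.
rewrite /act_span => H; have : forall s, s \in enum_fset S -> (rho s @: Z <= W)%VS by [].
elim: (enum_fset S) => [|x r IH] H'; first by rewrite big_nil sub0v.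
rewrite big_cons subv_add H' ?mem_head //=; apply: IH => s Hs; apply: H'; by rewrite inE Hs orbT.
Qed.

Lemma act_span_ge (k : fieldType) (G : zmodType) (V : vectType k)
  (rho : G -> 'End(V)) (S : {fset G}) (Z : {vspace V}) s :
  s \in S -> (rho s @: Z <= act_span rho S Z)%VS.
Proof.
rewrite /act_span; have -> : (s \in S) = (s \in enum_fset S) by [].
elim: (enum_fset S) => [|x r IH] //; rewrite inE big_cons => /orP [/eqP ->|Hs].
  exact: addvSl.
exact: subv_trans (IH Hs) (addvSr _ _).
Qed.

Lemma act_spanS (k : fieldType) (G : zmodType) (V : vectType k)
  (rho : G -> 'End(V)) (S : {fset G}) (Z Z' : {vspace V}) :
  (Z <= Z')%VS -> (act_span rho S Z <= act_span rho S Z')%VS.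
Proof.
move=> HZ; apply: act_span_le => s Hs.
apply: subv_trans (limgS _ HZ) _; exact: act_span_ge.
Qed.

Lemma dim_limg_le (k : fieldType) (V : vectType k) (f : 'End(V)) (U : {vspace V}) :
  (\dim (f @: U) <= \dim U)%N.
Proof. by rewrite -(limg_ker_dim f U) leq_addl. Qed.

Lemma rep_dim (k : fieldType) (G : zmodType) (V : vectType k)
  (rho : G -> 'End(V)) : is_representation rho ->
  forall g (U : {vspace V}), \dim (rho g @: U) = \dim U.
Proof.
move=> [H0 HM] g U; apply/eqP; rewrite eqn_leq dim_limg_le /=.
rewrite {1}(_ : U = (rho (- g) @: (rho g @: U))%VS); last by rewrite -limg_comp -HM addNr H0 lim1g.
exact: dim_limg_le.
Qed.

Lemma rep_comm (k : fieldType) (G : zmodType) (V : vectType k)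
  (rho : G -> 'End(V)) : is_representation rho ->
  forall g h (U : {vspace V}), (rho g @: (rho h @: U))%VS = (rho h @: (rho g @: U))%VS.
Proof. by move=> [_ HM] g h U; rewrite -!limg_comp -!HM addrC. Qed.

Lemma fset_prod_mem (G : zmodType) (A C : {fset G}) a c :
  a \in A -> c \in C -> a + c \in fset_prod A C.
Proof. by move=> Ha Hc; rewrite /fset_prod; apply: in_imfset2. Qed.

Lemma fset_prod_inv (G : zmodType) (A C : {fset G}) s :
  s \in fset_prod A C -> exists a c, [/\ a \in A, c \in C & s = a + c].
Proof. by case/imfset2P => a Ha [c Hc ->]; exists a, c. Qed.
From mathcomp Require Import zify ring lra.

Lemma act_span_img (k : fieldType) (G : zmodType) (V : vectType k)
  (rho : G -> 'End(V)) : is_representation rho ->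
  forall x S (Z : {vspace V}), (rho x @: act_span rho S Z)%VS = act_span rho S (rho x @: Z).
Proof.
move=> Hr x S Z; rewrite /act_span limg_sum; apply: eq_bigr => s _; exact: rep_comm.
Qed.

Lemma act_span_subset (k : fieldType) (G : zmodType) (V : vectType k)
  (rho : G -> 'End(V)) (S S' : {fset G}) (Z : {vspace V}) :
  (forall s, s \in S -> s \in S') -> (act_span rho S Z <= act_span rho S' Z)%VS.
Proof. move=> H; apply: act_span_le => s Hs; apply: act_span_ge; exact: H. Qed.

Lemma img_sub_preim (k : fieldType) (V : vectType k) (f : 'End(V)) (U W : {vspace V}) :
  (f @: U <= W)%VS = (U <= f @^-1: W)%VS.
Proof.
apply/idP/idP => H.
  by apply/subvP => u Hu; rewrite -memv_preim (subvP H) // memv_img.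
by apply/subvP => w /memv_imgP [u Hu ->]; rewrite memv_preim (subvP H).
Qed.

Lemma sub_bigcap_seq (k : fieldType) (G : eqType) (V : vectType k) (r : seq G)
  (F : G -> {vspace V}) (U : {vspace V}) :
  (forall a, a \in r -> (U <= F a)%VS) -> (U <= \bigcap_(a <- r) F a)%VS.
Proof.
elim: r => [|x r IH] H; first by rewrite big_nil subvf.
rewrite big_cons subv_cap H ?mem_head //=; apply: IH => a Ha; apply: H.
by rewrite inE Ha orbT.
Qed.

Lemma bigcap_seq_sub (k : fieldType) (G : eqType) (V : vectType k) (r : seq G)
  (F : G -> {vspace V}) a :
  a \in r -> (\bigcap_(b <- r) F b <= F a)%VS.
Proof.
elim: r => [|x r IH] //; rewrite inE big_cons => /orP [/eqP ->|Ha].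
  exact: capvSl.
exact: subv_trans (capvSr _ _) (IH Ha).
Qed.

Lemma key (k : fieldType) (G : zmodType) (V : vectType k)
  (rho : G -> 'End(V)) (A : {fset G}) (Z : {vspace V}) :
  is_representation rho ->
  (forall Z', (Z' <= Z)%VS ->
     (\dim (act_span rho A Z) * \dim Z' <= \dim (act_span rho A Z') * \dim Z)%N) ->
  forall C : {fset G},
   (\dim (act_span rho (fset_prod A C) Z) * \dim Z
     <= \dim (act_span rho A Z) * \dim (act_span rho C Z))%N.
Proof.
move=> Hr Hmin; have [H0 HM] := Hr.
elim/fset1U_rect => [|x C HxC IH].
  have -> : act_span rho (fset_prod A fset0) Z = 0%VS.
    apply/eqP; rewrite -subv0; apply: act_span_le => s /fset_prod_inv [a [c [_ Hc _]]].
    by rewrite inE in Hc.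
  by rewrite dimv0.
set W := act_span rho (fset_prod A C) Z.
set B := (rho x @: act_span rho A Z)%VS.
set W0 := (\bigcap_(a <- enum_fset A) (rho a @^-1: W))%VS.
set Z0 := (Z :&: rho x @^-1: W0)%VS.
have F1 : (act_span rho (fset_prod A (x |` C)%fset) Z <= W + B)%VS.
  apply: act_span_le => s /fset_prod_inv [a [c [Ha Hc ->]]].
  move: Hc; rewrite !inE => /orP [/eqP ->|Hc].
    apply: (subv_trans _ (addvSr _ _)).
    rewrite addrC HM limg_comp; apply: limgS; exact: act_span_ge.
  apply: (subv_trans _ (addvSl _ _)); apply: act_span_ge; exact: fset_prod_mem.
have F3 : (act_span rho C Z <= W0)%VS.
  apply: sub_bigcap_seq => a Ha; rewrite -img_sub_preim act_span_img //.
  apply: act_span_le => c Hc; rewrite rep_comm // -limg_comp -HM.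
  apply: act_span_ge; exact: fset_prod_mem.
have F2 : (act_span rho A (rho x @: Z0) <= W :&: B)%VS.
  rewrite subv_cap; apply/andP; split.
    apply: act_span_le => a Ha; rewrite img_sub_preim.
    apply: (subv_trans _ (@bigcap_seq_sub _ _ _ (enum_fset A) (fun b => rho b @^-1: W)%VS a Ha)).
    by rewrite img_sub_preim capvSr.
  rewrite /B act_span_img //; apply: act_spanS; apply: limgS; exact: capvSl.
have F4 : (act_span rho C Z :&: rho x @: Z <= rho x @: Z0)%VS.
  apply/subvP => v /memv_capP [Hv /memv_imgP [z Hz Ev]].
  rewrite Ev; apply: memv_img; rewrite memv_cap Hz /= -memv_preim -Ev.
  exact: (subvP F3).
have F5 : (act_span rho C Z + rho x @: Z <= act_span rho (x |` C)%fset Z)%VS.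
  rewrite subv_add; apply/andP; split.
    by apply: act_span_subset => s Hs; rewrite !inE Hs orbT.
  by apply: act_span_ge; rewrite !inE eqxx.
have E1 := dimv_sum_cap W B.
have E2 := dimv_sum_cap (act_span rho C Z) (rho x @: Z).
have D1 := dimvS F1.
have D2 := dimvS F2.
have D4 := dimvS F4.
have D5 := dimvS F5.
have M := Hmin Z0 (capvSl _ _).
rewrite /B !rep_dim // in E1 D2 D4 E2.
rewrite -act_span_img // rep_dim // in D2.
set w' := \dim (act_span rho (fset_prod A (x |` C)%fset) Z) in D1 *.
set a := \dim (act_span rho A Z) in E1 M IH *.
set a0 := \dim (act_span rho A Z0) in D2 M.
set c := \dim (act_span rho C Z) in E2 IH *.
set c' := \dim (act_span rho (x |` C)%fset Z) in D5 *.
rewrite -/B in E1 D2; rewrite -/W in IH.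
move: (\dim (act_span rho C Z + rho x @: Z)) (\dim (act_span rho C Z :&: rho x @: Z)) D4 E2 D5 => cx ccx D4 E2 D5.
move: (\dim (W + B)) (\dim (W :&: B)) (\dim W) (\dim Z) (\dim Z0) D1 E1 D2 M IH D4 E2 D5 => wb wcb w d z0 D1 E1 D2 M IH D4 E2 D5.
clear -D1 E1 D2 M IH D4 E2 D5.
nia.
Qed.

Lemma exists_min (k : fieldType) (G : zmodType) (V : vectType k)
  (rho : G -> 'End(V)) (A : {fset G}) (Y : {vspace V}) :
  Y != 0%VS ->
  exists Z : {vspace V}, [/\ Z != 0%VS, (Z <= Y)%VS &
    forall Z', (Z' <= Y)%VS ->
     (\dim (act_span rho A Z) * \dim Z' <= \dim (act_span rho A Z') * \dim Z)%N].
Proof.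
move=> HY.
pose L := (\dim (fullv : {vspace V}))`!.
pose mu Z := (\dim (act_span rho A Z) * L %/ \dim Z)%N.
have Lpos : (0 < L)%N by exact: fact_gt0.
have muE : forall Z : {vspace V}, Z != 0%VS -> (mu Z * \dim Z = \dim (act_span rho A Z) * L)%N.
  move=> Z HZ; rewrite /mu divnK //; apply: dvdn_mull; apply: dvdn_fact.
  by rewrite lt0n dimv_eq0 HZ dimvS // subvf.
suff [Zm [HZm HZmY Hm]] : exists Zm : {vspace V}, [/\ Zm != 0%VS, (Zm <= Y)%VS &
    forall Z', Z' != 0%VS -> (Z' <= Y)%VS -> (mu Zm <= mu Z')%N].
  exists Zm; split => // Z' HZ'.
  have [->|nz] := eqVneq Z' 0%VS; first by rewrite dimv0 muln0.
  have h := Hm Z' nz HZ'.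
  have e1 := muE _ HZm; have e2 := muE _ nz.
  rewrite -(leq_pmul2r Lpos) mulnAC -e1 [X in (_ <= X)%N]mulnAC -e2.
  by rewrite -mulnA [X in (_ <= X)%N]mulnAC -mulnA leq_mul2r h orbT.
have main : forall n Z, Z != 0%VS -> (Z <= Y)%VS -> (mu Z < n)%N ->
   exists Zm : {vspace V}, [/\ Zm != 0%VS, (Zm <= Y)%VS &
    forall Z', Z' != 0%VS -> (Z' <= Y)%VS -> (mu Zm <= mu Z')%N].
  elim => [|n IH] Z HZ HZY Hn //.
  case: (classic (exists Z', [/\ Z' != 0%VS, (Z' <= Y)%VS & (mu Z' < mu Z)%N])).
    move=> [Z' [H1 H2 H3]]; apply: (IH Z') => //.
    exact: leq_trans H3 Hn.
  move=> Hno; exists Z; split => // Z' H1 H2; rewrite leqNgt; apply/negP => H3.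
  by apply: Hno; exists Z'.
exact: (main (mu Y).+1 Y).
Qed.

Theorem mainTheorem18 (R : realType) (k : fieldType) (G : zmodType) (V : vectType k)
  (rho : G -> 'End(V)) (A : {fset G}) (Y : {vspace V}) (alpha : R) :
  is_representation rho ->
  A != fset0 ->
  Y != 0%VS ->
  0 <= alpha ->
  ((\dim (act_span rho A Y))%:R <= alpha * (\dim Y)%:R) ->
  exists Z : {vspace V},
    [/\ Z != 0%VS, (Z <= Y)%VS &
      forall C : {fset G},
        (\dim (act_span rho (fset_prod A C) Z))%:R
          <= alpha * (\dim (act_span rho C Z))%:R].
Proof.
move=> Hr _ HY Ha HAY.
have [Z [HZ HZY Hm]] := @exists_min _ _ _ rho A Y HY.
exists Z; split => // C.
have HK := @key _ _ _ rho A Z Hr (fun Z' HZ' => Hm Z' (subv_trans HZ' HZY)) C.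
have HmY := Hm Y (subvv Y).
have dZ : (0 < \dim Z)%N by rewrite lt0n dimv_eq0.
have dY : (0 < \dim Y)%N by rewrite lt0n dimv_eq0.
move: HK HmY HAY dZ dY.
move: (\dim (act_span rho (fset_prod A C) Z)) (\dim Z) (\dim (act_span rho A Z))
  (\dim (act_span rho C Z)) (\dim Y) (\dim (act_span rho A Y)) => w d a c y ay.
move=> h1 h2 h3 hd hy.
have {}hd : 0 < d%:R :> R by rewrite ltr0n.
have {}hy : 0 < y%:R :> R by rewrite ltr0n.
move: h1 h2; rewrite -!(ler_nat R) !natrM => h1 h2.
have c0 : 0 <= c%:R :> R by [].
have ha : a%:R <= alpha * d%:R :> R.
  rewrite -(ler_pM2r hy); nra.
have : w%:R * d%:R <= alpha * c%:R * d%:R :> R by nra.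
by rewrite ler_pM2r.
Qed.
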